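(* With the notation of the context, let $\mathcal{P}$ be a unital partition of $G=\mu_{p^n}$ ($p$ an odd prime) and $0\le k\le n$ such that $\mathcal{P}_k\cap\mathcal{P}_l=\emptyset$ for all $l\ne k$. Then $B_{i,k}=A_{i,k}$ for all $i$.
   Context: A unital partition of a finite commutative group $G$ is a partition $G=\{1\}\sqcup A_0\sqcup\dots\sqcup A_s$ such that, with $a_i=\sum_{x\in A_i}x\in\mathbb{Z}[G]$, the $\mathbb{Z}$-span of $1$ and the $a_i$ is closed under multiplication in $\mathbb{Z}[G]$. Fix $\alpha$ an integer generating $(\mathbb{Z}/p^n\mathbb{Z})^\times$. $B_k=\{x^{p^k}\mid x\text{ a generator of }G\}$, $\mathcal{P}_k=\{A\in\mathcal{P}\mid A\cap B_k\neq\emptyset\}$. Fix $A\in\mathcal{P}_k$, $y\in A\cap B_k$; $u_k$ is the smallest positive integer with $y^{\alpha^{u_k}}\in A$, $\beta_k=\alpha^{u_k}$, $r_k+1=\phi(p^{n-k})/u_k$. For $X\subseteq G$, $X^m=\{x^m:x\in X\}$. $A_{i,k}=A^{\alpha^i}$, $B_{0,k}=\{y,y^{\beta_k},\dots,y^{\beta_k^{r_k}}\}$, $B_{i,k}=B_{0,k}^{\alpha^i}$. *)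

(* Defs.v *)
From HB Require Import structures.
From mathcomp Require Import all_boot all_order all_algebra all_fingroup all_solvable.
Set Implicit Arguments. Unset Strict Implicit. Unset Printing Implicit Defensive.
Import GRing.Theory.

Local Open Scope group_scope.

(* Elements of the group ring Z[G] are represented as functions gT -> int
   (supported in G). *)
Section GroupRing.
Variable gT : finGroupType.

Definition gr_ind (A : {set gT}) : gT -> int := fun g => Posz ((g \in A) : nat).

Definition gr_mul (f h : gT -> int) : gT -> int :=
  fun g => (\sum_(x : gT) f x * h ((x^-1 * g)%g))%R.

Definition gr_in_span (P : {set {set gT}}) (f : gT -> int) : Prop :=
  exists (c0 : int) (c : {set gT} -> int),
    forall g, f g = (c0 * gr_ind [set 1%g] g + \sum_(C in P) c C * gr_ind C g)%R.

Definition unital_partition (G : {group gT}) (P : {set {set gT}}) : Prop :=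
  partition P (G :\ 1) /\
  forall f h, gr_in_span P f -> gr_in_span P h -> gr_in_span P (gr_mul f h).

Definition set_pow (X : {set gT}) (m : nat) : {set gT} := [set x ^+ m | x in X].

Definition Bk (G : {group gT}) (p k : nat) : {set gT} :=
  [set x ^+ (p ^ k) | x in [set x in G | generator G x]].

Definition Pk (G : {group gT}) (P : {set {set gT}}) (p k : nat) : {set {set gT}} :=
  [set A in P | A :&: Bk G p k != set0].

End GroupRing.

(* Main.v *)
Require Import Defs.
From HB Require Import structures.
From mathcomp Require Import all_boot all_order all_algebra all_fingroup all_solvable.
Set Implicit Arguments. Unset Strict Implicit. Unset Printing Implicit Defensive.
Local Open Scope group_scope.

Lemma tuple_sum (T : finType) n (F : n.+1.-tuple T -> nat) :
  (\sum_(t : n.+1.-tuple T) F t = \sum_(x : T) \sum_(t : n.-tuple T) F [tuple of x :: t])%N.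
Proof.
rewrite pair_big /=.
rewrite (reindex (fun u : T * n.-tuple T => [tuple of u.1 :: u.2])) //=.
exists (fun t : n.+1.-tuple T => (thead t, [tuple of behead t])) => [[x t] _|t _] /=.
  by congr (_, _); apply: val_inj.
by rewrite [t in RHS]tuple_eta; apply: val_inj.
Qed.

Fixpoint pw (gT : finGroupType) (X : {set gT}) (m : nat) : gT -> int :=
  if m is m'.+1 then gr_mul (gr_ind X) (pw X m') else gr_ind [set 1].

Definition cnt (gT : finGroupType) (X : {set gT}) m (g : gT) : nat :=
  (\sum_(t : m.-tuple gT) (all [in X] t && ((\prod_(x <- t) x)%g == g)))%N.

Lemma pw_cnt (gT : finGroupType) (X : {set gT}) m g : pw X m g = Posz (cnt X m g).
Proof.
elim: m g => [|m IH] g /=.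
  rewrite /cnt /gr_ind inE.
  rewrite (eq_bigr (fun _ => (1 == g) : nat)); last first.
    by move=> t _; rewrite tuple0 big_nil.
  by rewrite sum_nat_const card_tuple expn0 mul1n eq_sym.
rewrite /gr_mul /cnt tuple_sum.
rewrite (big_morph Posz PoszD (erefl (Posz 0))).
apply: eq_bigr => x _; rewrite IH /cnt /gr_ind -PoszM big_distrr /=.
congr Posz; apply: eq_bigr => t _ /=; rewrite big_cons.
case: (x \in X) => //=; rewrite mul1n; congr (nat_of_bool (_ && _)).
apply/eqP/eqP => E; [by rewrite E mulKVg | by rewrite -E mulKg].
Qed.

Lemma ab_comm (gT : finGroupType) (G : {group gT}) x y :
  abelian G -> x \in G -> y \in G -> x * y = y * x.
Proof. by move/centsP => cG Gx Gy; apply: (cG _ Gx). Qed.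

Lemma pow_inj (gT : finGroupType) (G : {group gT}) q x y :
  coprime #|G| q -> x \in G -> y \in G -> x ^+ q = y ^+ q -> x = y.
Proof. by move=> co Gx Gy E; rewrite -(expgK co Gx) E expgK. Qed.

Lemma rcons_fix (T : eqType) (s : seq T) a : rcons s a = a :: s -> s = nseq (size s) a.
Proof.
elim: s => //= b s IH [-> E]; congr (_ :: _); apply: IH; by rewrite E.
Qed.

Lemma rot1_nseq (T : eqType) n (a : T) : seq.rot 1 (nseq n a) = nseq n a.
Proof.
case: n => //= n; rewrite rot1_cons.
by elim: n => //= n ->.
Qed.

Lemma prod_nseq (gT : finGroupType) n (x : gT) : (\prod_(i <- nseq n x) i)%g = x ^+ n.
Proof. by elim: n => [|n IH]; rewrite ?big_nil ?expg0 // -[nseq _ _]/(x :: nseq n x) big_cons IH expgS. Qed.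

Lemma prod_rot1 (gT : finGroupType) (G : {group gT}) (s : seq gT) :
  abelian G -> all [in G] s -> (\prod_(i <- seq.rot 1 s) i)%g = (\prod_(i <- s) i)%g.
Proof.
move=> aG; case: s => // a s /= /andP[Ga Gs]; rewrite rot1_cons big_rcons big_cons /=.
apply: ab_comm aG _ Ga; rewrite big_seq; apply: group_prod => i; exact: (allP Gs).
Qed.
Definition rot1t (T : finType) q (t : q.-tuple T) : q.-tuple T := [tuple of seq.rot 1 t].

Lemma rot1t_inj (T : finType) q : injective (@rot1t T q).
Proof. by move=> t1 t2 /(congr1 val)/rot_inj/val_inj. Qed.

Lemma cnt_card (gT : finGroupType) (X : {set gT}) m g :
  cnt X m g = #|[set t : m.-tuple gT | all [in X] t && ((\prod_(x <- t) x)%g == g)]|.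
Proof.
rewrite -sum1dep_card big_mkcond /cnt; apply: eq_bigr => t _; by case: ifP.
Qed.

Lemma cnt_mod (gT : finGroupType) (G : {group gT}) (X : {set gT}) q g :
  abelian G -> X \subset G -> prime q -> coprime #|G| q ->
  cnt X q g = (g \in set_pow X q) %[mod q].
Proof.
move=> aG sXG pq co.
set S := [set t : q.-tuple gT | all [in X] t && ((\prod_(x <- t) x)%g == g)].
have -> : cnt X q g = #|S| by rewrite cnt_card.
set s := perm (@rot1t_inj gT q).
have iterE : forall i t, i <= q -> val (iter i s t) = seq.rot i t.
  elim=> [|i IH] t le; first by rewrite rot0.
  rewrite iterS permE /= IH ?(ltnW le) //.
  by rewrite -rotS // size_tuple.
have pG : q.-group <[s]>.
  rewrite /pgroup -orderE; apply: pnat_dvd (pnat_id pq).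
  rewrite order_dvdn; apply/eqP/permP => t; rewrite permX perm1.
  by apply: val_inj; rewrite iterE // -{1}(size_tuple t) rot_size.
have acts : [acts <[s]>, on S | 'P].
  rewrite cycle_subG; apply/astabsP => t; rewrite /= apermE /s permE !inE /=.
  have pr : perm_eq (seq.rot 1 t) t by rewrite perm_rot.
  rewrite (perm_all _ pr).
  case Xt: (all [in X] t) => //=.
  rewrite (prod_rot1 aG) //; apply/allP => x /(allP Xt) Xx.
  exact: (subsetP sXG).
rewrite (pgroup_fix_mod pG acts); congr (_ %% q).
have q0 : 0 < q by apply: prime_gt0.
have -> : 'Fix_(S | 'P)(<[s]>) =
    [set nseq_tuple q x | x in [set x in X | x ^+ q == g]].
  apply/setP => t; rewrite afix_cycle !inE sub1set inE.
  apply/idP/idP.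
    case/andP => /andP[Xt /eqP Pt] /eqP; rewrite /= apermE /s permE.
    move/(congr1 val) => /=.
    case Et: (val t) Xt Pt => [|a s'] Xt Pt.
      by move: (size_tuple t); rewrite Et => q00; rewrite -q00 in q0.
    rewrite rot1_cons => /rcons_fix Es'.
    have st : size s' = q.-1 by rewrite -(size_tuple t) Et.
    apply/imsetP; exists a.
      rewrite inE -Pt big_cons Es' prod_nseq -expgS st prednK // eqxx andbT.
      by case/andP: Xt.
    by apply: val_inj; rewrite /= Et Es' st -(prednK q0).
  case/imsetP => x; rewrite inE => /andP[Xx /eqP xq] ->.
  apply/andP; split.
    rewrite /= all_nseq Xx orbT prod_nseq xq eqxx //.
  by apply/eqP; rewrite /= apermE /s permE; apply: val_inj; rewrite /= rot1_nseq.
rewrite card_imset; last first.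
  by move=> x1 x2 /(congr1 val) /=; case: (q) q0 => // q' _ [].
case: (boolP (g \in set_pow X q)) => [gin|ng].
  case/imsetP: gin => x0 Xx0 gE; rewrite gE.
  rewrite [RHS]/= -(cards1 x0); apply: eq_card => x; rewrite !inE.
  apply/andP/eqP => [[Xx /eqP E]|->]; last by rewrite Xx0 eqxx.
  apply: (pow_inj co) E; exact: (subsetP sXG).
rewrite [RHS]/=; apply/eqP; rewrite cards_eq0; apply/eqP/setP => x; rewrite !inE.
apply/negP => /andP[Xx /eqP E]; case/negP: ng; apply/imsetP; exists x => //.
Qed.

Definition sat (gT : finGroupType) (P : {set {set gT}}) (X : {set gT}) :=
  forall D, D \in P -> forall z z', z \in D -> z' \in D -> (z \in X) = (z' \in X).

Lemma sum_at (gT : finGroupType) (P : {set {set gT}}) (c : {set gT} -> int) D z :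
  trivIset P -> D \in P -> z \in D ->
  (\sum_(C in P) c C * Posz (z \in C) = c D)%R.
Proof.
move=> tP PD zD; rewrite (bigD1 D) //= zD GRing.mulr1 big1 ?GRing.addr0 // => C /andP[PC CD].
case zC: (z \in C); last by rewrite GRing.mulr0.
by move: CD; rewrite -(def_pblock tP PC zC) (def_pblock tP PD zD) eqxx.
Qed.

Lemma sum_out (gT : finGroupType) (P : {set {set gT}}) (c : {set gT} -> int) z :
  z \notin cover P -> (\sum_(C in P) c C * Posz (z \in C) = 0)%R.
Proof.
move=> nz; rewrite big1 // => C PC; case zC: (z \in C); last by rewrite GRing.mulr0.
by case/negP: nz; apply/bigcupP; exists C.
Qed.

Lemma span_const (gT : finGroupType) (G : {group gT}) (P : {set {set gT}}) f D z z' :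
  partition P (G :\ 1) -> gr_in_span P f -> D \in P -> z \in D -> z' \in D -> f z = f z'.
Proof.
case/and3P => /eqP cP tP _ [c0 [c Ef]] PD zD z'D.
have n1 : forall w, w \in D -> w \in [set 1] = false.
  move=> w wD; apply/negP; rewrite inE => /eqP w1.
  have : w \in cover P by apply/bigcupP; exists D.
  by rewrite cP w1 !inE eqxx.
rewrite !Ef /gr_ind !n1 // !(sum_at c tP PD) //.
Qed.

Lemma sat_span (gT : finGroupType) (G : {group gT}) (P : {set {set gT}}) (X : {set gT}) :
  partition P (G :\ 1) -> X \subset G :\ 1 -> sat P X -> gr_in_span P (gr_ind X).
Proof.
move=> hP sX sX'; have /and3P[/eqP cP tP _] := hP.
exists 0%R, (fun C : {set gT} => Posz (C \subset X)) => g; rewrite GRing.mul0r GRing.add0r.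
case: (boolP (g \in cover P)) => gc.
  have PD := pblock_mem gc; have gD : g \in pblock P g by rewrite mem_pblock.
  rewrite (sum_at _ tP PD gD) /gr_ind; congr Posz; congr nat_of_bool.
  apply/idP/subsetP => [gX z zD|]; last by apply.
  by rewrite (sX' _ PD z g zD gD).
rewrite sum_out // /gr_ind; case gX: (g \in X) => //.
by case/negP: gc; rewrite cP; apply: (subsetP sX).
Qed.

Lemma pw_span (gT : finGroupType) (G : {group gT}) (P : {set {set gT}}) (X : {set gT}) m :
  unital_partition G P -> gr_in_span P (gr_ind X) -> gr_in_span P (pw X m).
Proof.
case=> hP hM sX; elim: m => [|m IH] /=.
  exists 1%R, (fun _ => 0%R) => g; rewrite GRing.mul1r big1 ?GRing.addr0 // => C _.
exact: (hM _ _ sX IH).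
Qed.

Lemma set_pow_sub (gT : finGroupType) (G : {group gT}) (X : {set gT}) q :
  coprime #|G| q -> X \subset G :\ 1 -> set_pow X q \subset G :\ 1.
Proof.
move=> co sX; apply/subsetP => w /imsetP[x Xx ->].
have := subsetP sX x Xx; rewrite !inE => /andP[x1 Gx].
rewrite groupX // andbT; apply/negP => /eqP xq.
case/negP: x1; apply/eqP; apply: (pow_inj co) => //; by rewrite xq expg1n.
Qed.

Lemma sat_pow (gT : finGroupType) (G : {group gT}) (P : {set {set gT}}) (X : {set gT}) q :
  unital_partition G P -> abelian G -> X \subset G :\ 1 -> sat P X -> prime q ->
  coprime #|G| q -> sat P (set_pow X q).
Proof.
move=> hU aG sX sX' pq co D PD z z' zD z'D.
have hsp := pw_span q hU (sat_span hU.1 sX sX').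
have E := span_const hU.1 hsp PD zD z'D.
rewrite !pw_cnt in E; case: E => E.
have sXG : X \subset G by apply: subset_trans sX (subsetDl _ _).
have := cnt_mod z aG sXG pq co; rewrite E (cnt_mod z' aG sXG pq co).
have q2 : 1 < q by apply: prime_gt1.
by rewrite !modn_small ?(leq_ltn_trans (leq_b1 _) q2) //; do 2 case: (_ \in _).
Qed.

Lemma set_pow1 (gT : finGroupType) (X : {set gT}) : set_pow X 1 = X.
Proof. by apply/setP => x; apply/imsetP/idP => [[y Xy ->]|Xx]; [rewrite expg1 | exists x; rewrite ?expg1]. Qed.

Lemma set_powM (gT : finGroupType) (X : {set gT}) a b :
  set_pow X (a * b) = set_pow (set_pow X a) b.
Proof.
apply/setP => x; apply/imsetP/imsetP => [[y Xy ->]|[w /imsetP[y Xy ->] ->]].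
  by exists (y ^+ a); [apply/imsetP; exists y | rewrite expgM].
by exists y; rewrite ?expgM.
Qed.

Lemma sat_pow_m (gT : finGroupType) (G : {group gT}) (P : {set {set gT}}) (X : {set gT}) m :
  unital_partition G P -> abelian G -> X \subset G :\ 1 -> sat P X -> 0 < m ->
  coprime #|G| m -> sat P (set_pow X m) /\ set_pow X m \subset G :\ 1.
Proof.
move=> hU aG sX sX'; elim/ltn_ind: m => m IH m0 co.
case: (ltngtP m 1) => [|m1|->]; last by rewrite set_pow1.
  by rewrite ltnS leqn0 => /eqP m00; rewrite m00 in m0.
have pq := pdiv_prime m1; have dq := pdiv_dvd m.
have -> : m = (m %/ pdiv m * pdiv m)%N by rewrite divnK.
have m'0 : 0 < m %/ pdiv m by rewrite divn_gt0 ?prime_gt0 // dvdn_leq.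
have lt : m %/ pdiv m < m by rewrite ltn_Pdiv ?prime_gt1.
have co' : coprime #|G| (m %/ pdiv m).
  by apply: coprime_dvdr co; apply: dvdn_div.
have coq : coprime #|G| (pdiv m) by apply: coprime_dvdr co.
have [s1 s2] := IH _ lt m'0 co'.
rewrite set_powM; split; last exact: set_pow_sub.
exact: (sat_pow hU aG s2 s1 pq coq).
Qed.

Lemma block_sub (gT : finGroupType) (G : {group gT}) (P : {set {set gT}}) A :
  partition P (G :\ 1) -> A \in P -> A \subset G :\ 1.
Proof.
case/and3P => /eqP cP _ _ PA; rewrite -cP; apply/subsetP => x xA.
by apply/bigcupP; exists A.
Qed.

Lemma block_sat (gT : finGroupType) (G : {group gT}) (P : {set {set gT}}) A :
  partition P (G :\ 1) -> A \in P -> sat P A.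
Proof.
case/and3P => _ tP _ PA D PD z z' zD z'D.
have E : forall w, w \in D -> (w \in A) = (A == D).
  move=> w wD; apply/idP/eqP => [wA|->] //.
  by rewrite -(def_pblock tP PA wA) (def_pblock tP PD wD).
by rewrite !E.
Qed.

Lemma blockfix (gT : finGroupType) (G : {group gT}) (P : {set {set gT}}) A e z :
  unital_partition G P -> abelian G -> A \in P -> 0 < e -> coprime #|G| e ->
  z \in A -> z ^+ e \in A -> set_pow A e = A.
Proof.
move=> hU aG PA e0 co zA zeA.
have sA := block_sub hU.1 PA.
have [s1 s2] := sat_pow_m hU aG sA (block_sat hU.1 PA) e0 co.
have sub : A \subset set_pow A e.
  apply/subsetP => w wA; rewrite -(s1 A PA (z ^+ e) w zeA wA).
  by apply/imsetP; exists z.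
have sAG : A \subset G by apply: subset_trans sA (subsetDl _ _).
apply/eqP; rewrite eq_sym eqEcard sub card_in_imset ?leqnn //.
move=> x y xA yA; apply: (pow_inj co); exact: (subsetP sAG).
Qed.

Lemma set_pow_inj (gT : finGroupType) (G : {group gT}) (X Y : {set gT}) e :
  coprime #|G| e -> X \subset G -> Y \subset G -> set_pow X e = set_pow Y e -> X = Y.
Proof.
move=> co sX sY E.
suff H : forall X Y : {set gT}, X \subset G -> Y \subset G -> set_pow X e = set_pow Y e -> X \subset Y.
  by apply/eqP; rewrite eqEsubset !(H _ _ sX sY E) // (H _ _ sY sX).
move=> X1 Y1 s1 s2 E1; apply/subsetP => x xX.
have : x ^+ e \in set_pow Y1 e by rewrite -E1; apply/imsetP; exists x.
case/imsetP => y yY exy.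
by rewrite (pow_inj co (subsetP s1 x xX) (subsetP s2 y yY) exy).
Qed.

Unset Implicit Arguments.
Set Strict Implicit.

Theorem corollary3p9 (gT : finGroupType) (G : {group gT}) (p n : nat)
  (hp : prime p) (hodd : odd p)
  (hcyc : cyclic G) (hcard : #|G| = (p ^ n)%N)
  (alpha : nat)
  (halpha_unit : coprime alpha (p ^ n)%N)
  (halpha_gen : forall b, coprime b (p ^ n)%N -> exists j, (b = alpha ^ j %[mod p ^ n])%N)
  (P : {set {set gT}}) (hP : unital_partition G P)
  (k : nat) (hk : k <= n)
  (hdisj : forall l, l <= n -> l != k -> Pk G P p k :&: Pk G P p l = set0)
  (A : {set gT}) (hA : A \in Pk G P p k)
  (y : gT) (hy : y \in A :&: Bk G p k)
  (u : nat) (hu_pos : 0 < u) (hu_in : y ^+ (alpha ^ u)%N \in A)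
  (hu_min : forall v, 0 < v -> v < u -> y ^+ (alpha ^ v)%N \notin A) :
  let beta := (alpha ^ u)%N in
  let r := (totient (p ^ (n - k)) %/ u - 1)%N in
  let B0 := [set y ^+ (beta ^ (nat_of_ord j))%N | j : 'I_r.+1] in
  forall i : nat, set_pow B0 (alpha ^ i)%N = set_pow A (alpha ^ i)%N.
Proof.
move=> beta r B0 i.
suff -> : B0 = A by [].
have hpart := hP.1.
have aG := cyclic_abelian hcyc.
have PA : A \in P by move: hA; rewrite inE => /andP[].
have [yA yB] : y \in A /\ y \in Bk G p k by move: hy; rewrite inE => /andP[].
have sA := block_sub hpart PA.
have sAG : A \subset G by apply: subset_trans sA (subsetDl _ _).
case/imsetP: yB => x; rewrite inE => /andP[Gx genx] yE.
have Gdef : G :=: <[x]> by apply/eqP.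
have ox : #[x] = (p ^ n)%N by rewrite /order -Gdef hcard.
have p1 : 1 < p := prime_gt1 hp.
have y1 : y != 1 by have := subsetP sA y yA; rewrite !inE => /andP[].
have n0 : 0 < n.
  case: (posnP n) => // n00; rewrite n00 expn0 in ox.
  have x1 : x = 1 by rewrite -[x]expg1 -ox expg_order.
  by rewrite yE x1 expg1n eqxx in y1.
have cap : coprime alpha p by rewrite -(coprime_pexpr _ _ n0).
have a0 : 0 < alpha.
  rewrite lt0n; apply/negP => /eqP a00; move: cap.
  by rewrite a00 /coprime gcd0n => /eqP p1'; rewrite p1' in p1.
have coG : forall e, coprime e (p ^ n) -> coprime #|G| e.
  by move=> e; rewrite hcard coprime_sym.
have yG : y \in G by apply: (subsetP sAG).
have yM : forall b, y ^+ b = y ^+ (b %% p ^ n).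
  by move=> b; rewrite expg_mod // -hcard expg_cardG.
have powA : forall e, 0 < e -> coprime e (p ^ n) -> y ^+ e \in A -> set_pow A e = A.
  by move=> e e0 co ye; apply: (blockfix hP aG PA e0 (coG _ co) yA ye).
have ae : forall j, 0 < alpha ^ j /\ coprime (alpha ^ j) (p ^ n).
  by move=> j; split; [rewrite expn_gt0 a0 | apply: coprimeXl].
have Abeta : forall d, set_pow A (beta ^ d) = A.
  elim=> [|d IH]; first by rewrite expn0 set_pow1.
  rewrite expnSr set_powM IH; apply: powA; [exact: (proj1 (ae u)) | exact: (proj2 (ae u)) | exact: hu_in].
have divu : forall j, y ^+ (alpha ^ j) \in A -> (u %| j)%N.
  move=> j yj.
  have E1 := powA _ (proj1 (ae j)) (proj2 (ae j)) yj.
  have Ej : (alpha ^ j = beta ^ (j %/ u) * alpha ^ (j %% u))%N.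
    by rewrite {1}(divn_eq j u) expnD [(_ * u)%N]mulnC expnM.
  rewrite Ej set_powM Abeta in E1.
  have ys : y ^+ (alpha ^ (j %% u)) \in A by rewrite -E1; apply/imsetP; exists y.
  have [s00|s0] := posnP (j %% u); first by apply/eqP.
  by rewrite (negbTE (hu_min _ s0 (ltn_pmod j hu_pos))) in ys.
pose M := (p ^ (n - k))%N.
have yM2 : y ^+ M = 1 by rewrite yE -expgM -expnD subnKC // -ox expg_order.
have euler : (alpha ^ totient M = 1 %[mod M])%N.
  apply: Euler_exp_totient; apply: coprime_dvdr halpha_unit.
  exact: dvdn_exp2l (leq_subr k n).
have yphi : y ^+ (alpha ^ totient M) = y.
  by rewrite -(expg_mod _ yM2) euler (expg_mod 1 yM2) expg1.
have udiv := divu _ (eq_ind_r (fun w => w \in A) yA yphi).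
have phi0 : 0 < totient M by rewrite totient_gt0 expn_gt0 prime_gt0.
have rE : (r.+1 = totient M %/ u)%N.
  by rewrite /r subn1 prednK // divn_gt0 // dvdn_leq.
have betar : (beta ^ r.+1 = alpha ^ totient M)%N by rewrite rE /beta -expnM mulnC divnK.
apply/eqP; rewrite eqEsubset; apply/andP; split.
  apply/subsetP => w /imsetP[j _ ->].
  by rewrite -(Abeta j); apply/imsetP; exists y.
apply/subsetP => z zA.
have := subsetP sA z zA; rewrite !inE => /andP[z1 zG].
rewrite Gdef in zG; case/cycleP: zG => i0 zE.
pose a := (i0 %% p ^ n)%N.
have za : z = x ^+ a by rewrite zE /a -ox expg_mod_order.
have a0' : 0 < a.
  rewrite lt0n; apply/negP => /eqP a00.
  by rewrite za a00 expg0 eqxx in z1.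
have [b cpb aE] := pfactor_coprime hp a0'.
move: aE; set l := logn p a => aE.
have ltl : l < n.
  rewrite -(ltn_exp2l _ _ p1); apply: leq_ltn_trans (_ : a < p ^ n).
    by apply: dvdn_leq => //; rewrite [X in (_ %| X)%N]aE dvdn_mull.
  by rewrite /a ltn_pmod // expn_gt0 prime_gt0.
have genb : generator G (x ^+ b).
  by rewrite Gdef generator_coprime ox coprime_pexpl.
have zBl : z \in Bk G p l.
  apply/imsetP; exists (x ^+ b); first by rewrite inE groupX // genb.
  by rewrite za aE expgM.
have lk : l = k.
  case: (eqVneq l k) => // nlk.
  have := hdisj l (ltnW ltl) nlk; move/setP/(_ A).
  rewrite inE hA /= [in RHS]inE => H.
  have : A \in Pk G P p l.
    rewrite inE PA /=; apply/set0Pn; exists z; by rewrite inE zA zBl.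
  by rewrite H.
rewrite lk in aE.
have zyb : z = y ^+ b by rewrite za aE mulnC expgM -yE.
have cb : coprime b (p ^ n) by rewrite coprime_sym coprime_pexpl.
have [j bj] := halpha_gen b cb.
have zyj : z = y ^+ (alpha ^ j) by rewrite zyb yM bj -yM.
have /dvdnP[d jd] := divu j (eq_ind_r (fun w => w \in A) zA (esym zyj)).
have -> : z = y ^+ (beta ^ (d %% r.+1)).
  rewrite zyj jd mulnC expnM -/beta.
  rewrite -(expg_mod _ yM2) -[in RHS](expg_mod _ yM2); congr (y ^+ _).
  rewrite {1}(divn_eq d r.+1) expnD [(_ * r.+1)%N]mulnC expnM betar.
  by rewrite -modnMml -modnXm euler modnXm exp1n modnMml mul1n.
by apply/imsetP; exists (Ordinal (ltn_pmod d (ltn0Sn r))).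
Qed.
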